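(* Let $M\in\mathbb N$ and let $X(M)$ be the subshift defined below. For $n\ge1$, the number $p_n(X(M))$ of $n$-periodic points of $X(M)$ is $$(2M+1)^n+(M+2)^n-\sum_{i=0}^{n/2}\binom{n}{i}2^i\left(M^i+M^{n-i}\right)+\binom{n}{n/2}(2M)^{n/2}\quad\text{if } n \text{ is even},$$ $$(2M+1)^n+(M+2)^n-\sum_{i=0}^{(n-1)/2}\binom{n}{i}2^i\left(M^i+M^{n-i}\right)\quad\text{if } n \text{ is odd}.$$
   Context: Let $\Sigma_1=\{\lambda,\xi,\rho_1,\dots,\rho_M,\eta_1,\dots,\eta_M\}$. $\mathcal M_1(M)$ is the monoid with zero generated by $\Sigma_1$ and an identity $\mathbf 1$, subject only to the relations $\lambda\rho_i=\mathbf 1$, $\lambda\eta_i=0$, $\xi\eta_i=\mathbf 1$, $\xi\rho_i=0$ ($1\le i\le M$), $\mathbf 1$ is the identity and $0$ is absorbing; no other relations. $\mathit{red}:\Sigma_1^*\to\mathcal M_1(M)$ sends a word to the product of its letters (empty word to $\mathbf 1$). $X(M)=\{x\in\Sigma_1^{\mathbb Z}:\mathit{red}(x_i\cdots x_j)\neq 0\ \forall i\le j\}$ with shift $\sigma$, and $p_n(X(M))=\#\{x\in X(M):\sigma^nx=x\}$. *)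

(* Defs.v *)
From mathcomp Require Import all_boot all_order all_algebra.
Set Implicit Arguments. Unset Strict Implicit. Unset Printing Implicit Defensive.
Import Order.TTheory GRing.Theory Num.Theory.

(* The alphabet Sigma_1 = {lambda, xi, rho_1..rho_M, eta_1..eta_M};
   indices i in 1..M are represented by 'I_M (i.e. 0..M-1). *)
Inductive Sigma1 (M : nat) : Type :=
| Lam : Sigma1 M
| Xi  : Sigma1 M
| Rho : 'I_M -> Sigma1 M
| Eta : 'I_M -> Sigma1 M.

Arguments Lam {M}. Arguments Xi {M}.

(* Elements of the free monoid with zero on Sigma1: Some w for a word w,
   None for the zero 0. *)
Definition fmz (M : nat) := option (seq (Sigma1 M)).

Inductive rel_step (M : nat) : fmz M -> fmz M -> Prop :=
| st_lam_rho u v (i : 'I_M) :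
    rel_step (Some (u ++ [:: Lam; Rho i] ++ v)) (Some (u ++ v))
| st_lam_eta u v (i : 'I_M) :
    rel_step (Some (u ++ [:: Lam; Eta i] ++ v)) None
| st_xi_eta u v (i : 'I_M) :
    rel_step (Some (u ++ [:: Xi; Eta i] ++ v)) (Some (u ++ v))
| st_xi_rho u v (i : 'I_M) :
    rel_step (Some (u ++ [:: Xi; Rho i] ++ v)) None.

(* M_1(M) is the quotient by this congruence. *)
Inductive mcong (M : nat) : fmz M -> fmz M -> Prop :=
| mc_step a b : rel_step a b -> mcong a b
| mc_refl a : mcong a a
| mc_sym a b : mcong a b -> mcong b a
| mc_trans a b c : mcong a b -> mcong b c -> mcong a c.

Definition red_nonzero (M : nat) (w : seq (Sigma1 M)) : Prop :=
  ~ mcong (Some w) None.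

Definition bisq (M : nat) := int -> Sigma1 M.

Definition subword (M : nat) (x : bisq M) (i : int) (k : nat) : seq (Sigma1 M) :=
  [seq x (i + (j%:Z))%R | j <- iota 0 k.+1].

Definition inX (M : nat) (x : bisq M) : Prop :=
  forall (i : int) (k : nat), red_nonzero (subword x i k).

Definition shift (M : nat) (x : bisq M) : bisq M := fun i => x (i + 1)%R.

Definition periodic_pt (M : nat) (n : nat) (x : bisq M) : Prop :=
  iter n (@shift M) x = x.

Definition card_periodic_is (M n N : nat) : Prop :=
  exists f : 'I_N -> bisq M,
    injective f /\
    (forall k, inX (f k) /\ periodic_pt n (f k)) /\
    (forall x, inX x -> periodic_pt n x -> exists k, f k = x).

(* Main.v *)
From HB Require Import structures.
Require Import Defs.
From mathcomp Require Import all_boot all_order all_algebra.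
From mathcomp Require Import zify ring.
From Stdlib Require Import FunctionalExtensionality.
Set Implicit Arguments. Unset Strict Implicit. Unset Printing Implicit Defensive.
Import Order.TTheory GRing.Theory Num.Theory.



Definition s2c M (x : Sigma1 M) : bool + ('I_M + 'I_M) :=
  match x with Lam => inl true | Xi => inl false | Rho i => inr (inl i) | Eta i => inr (inr i) end.
Definition c2s M (y : bool + ('I_M + 'I_M)) : Sigma1 M :=
  match y with inl true => Lam | inl false => Xi | inr (inl i) => Rho i | inr (inr i) => Eta i end.
Lemma s2cK M : cancel (@s2c M) (@c2s M). Proof. by case. Qed.
HB.instance Definition _ M := Equality.copy (Sigma1 M) (can_type (@s2cK M)).

Section A.
Variable M : nat.
Notation L := (Sigma1 M).

Definition isOpen (l : L) := match l with Lam | Xi => true | _ => false end.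
Definition compat (o c : L) :=
  match o, c with Lam, Rho _ => true | Xi, Eta _ => true | _, _ => false end.
Definition state := option (seq L * seq bool).
Definition Fstep (s : state) (l : L) : state :=
  match s with None => None | Some (cs, os) =>
   match l with
   | Lam => Some (cs, true :: os)
   | Xi => Some (cs, false :: os)
   | Rho i => match os with [::] => Some (rcons cs l, [::])
              | b :: os' => if b then Some (cs, os') else None end
   | Eta i => match os with [::] => Some (rcons cs l, [::])
              | b :: os' => if b then None else Some (cs, os') end
   end end.
Definition Frun s (w : seq L) := foldl Fstep s w.
Definition Fw w := Frun (Some ([::], [::])) w.

Lemma Frun_None w : Frun None w = None.
Proof. by elim: w. Qed.
Lemma Frun_cat s u v : Frun s (u ++ v) = Frun (Frun s u) v.
Proof. exact: foldl_cat. Qed.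
Lemma Fstep_pair s o c : isOpen o -> ~~ isOpen c ->
  Fstep (Fstep s o) c = if compat o c then s else None.
Proof. by case: s => [[cs os]|]; case: o => //; case: c => //= *; case: compat. Qed.

Lemma Fw_rem u o c v : isOpen o -> ~~ isOpen c ->
  Fw (u ++ o :: c :: v) = if compat o c then Fw (u ++ v) else None.
Proof.
move=> ho hc; rewrite /Fw !Frun_cat /= Fstep_pair //.
by case: compat => //; rewrite Frun_None.
Qed.

Definition kind (b : bool) : L := if b then Lam else Xi.
Definition emb (s : state) : fmz M :=
  match s with None => None | Some (cs, os) => Some (cs ++ rev (map kind os)) end.
Definition mulr (a : fmz M) (l : L) : fmz M :=
  match a with None => None | Some w => Some (rcons w l) end.

Lemma step_rcons a b l : rel_step a b -> rel_step (mulr a l) (mulr b l).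
Proof.
case=> u v i /=; rewrite !rcons_cat.
- exact: (st_lam_rho u (rcons v l) i).
- exact: (st_lam_eta u (rcons v l) i).
- exact: (st_xi_eta u (rcons v l) i).
- exact: (st_xi_rho u (rcons v l) i).
Qed.

Lemma mcong_rcons a b l : mcong a b -> mcong (mulr a l) (mulr b l).
Proof.
elim=> {a b} [a b /step_rcons h|a|a b _ h|a b c _ h1 _ h2].
- exact: mc_step.
- exact: mc_refl.
- exact: mc_sym.
- exact: mc_trans h2.
Qed.

Lemma Fw_emb w : mcong (Some w) (emb (Fw w)).
Proof.
elim/last_ind: w => [|w l IH]; first exact: mc_refl.
rewrite /Fw -cats1 Frun_cat /=.
apply: (mc_trans (b := mulr (emb (Fw w)) l)); first by rewrite cats1; apply: (mcong_rcons l IH).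
rewrite /Fw; case: (Frun _ w) => [[cs os]|] /=; last exact: mc_refl.
case: l => [||i|i] /=.
- by rewrite rev_cons rcons_cat; apply: mc_refl.
- by rewrite rev_cons rcons_cat; apply: mc_refl.
- case: os => [|b os] /=; first by rewrite !cats0; apply: mc_refl.
  rewrite rev_cons rcons_cat -cats1 -cats1 -!catA /=.
  case: b => /=; apply: mc_step.
  + have := st_lam_rho (cs ++ rev (map kind os)) [::] i.
    by rewrite -!catA /= cats0.
  + have := st_xi_rho (cs ++ rev (map kind os)) [::] i.
    by rewrite -!catA /=.
- case: os => [|b os] /=; first by rewrite !cats0; apply: mc_refl.
  rewrite rev_cons rcons_cat -cats1 -cats1 -!catA /=.
  case: b => /=; apply: mc_step.
  + have := st_lam_eta (cs ++ rev (map kind os)) [::] i.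
    by rewrite -!catA /=.
  + have := st_xi_eta (cs ++ rev (map kind os)) [::] i.
    by rewrite -!catA /= cats0.
Qed.

Definition Fo (a : fmz M) : state := match a with None => None | Some w => Fw w end.

Lemma step_F a b : rel_step a b -> Fo a = Fo b.
Proof.
case=> u v i /=.
- by rewrite (Fw_rem u (o:=Lam) (c:=Rho i)).
- by rewrite (Fw_rem u (o:=Lam) (c:=Eta i)).
- by rewrite (Fw_rem u (o:=Xi) (c:=Eta i)).
- by rewrite (Fw_rem u (o:=Xi) (c:=Rho i)).
Qed.

Lemma mcong_F a b : mcong a b -> Fo a = Fo b.
Proof.
elim=> {a b} [a b /step_F //|a //|a b _ -> //|a b c _ -> _ -> //].
Qed.

Lemma red_nz_iff w : red_nonzero w <-> Fw w <> None.
Proof.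
split.
- move=> H E; apply: H; apply: (mc_trans (Fw_emb w)); rewrite E; exact: mc_refl.
- by move=> H /mcong_F /= C.
Qed.

Lemma Frun_ext w : forall cs os cs' ext,
  Frun (Some (cs, os)) w = None -> Frun (Some (cs', os ++ ext)) w = None.
Proof.
elim: w => [|l w IH] cs os cs' ext //=.
case: l => [||i|i] /=.
- exact: (IH _ (true :: os)).
- exact: (IH _ (false :: os)).
- case: os => [|b os] /=.
  + case: ext => [|e ext] /=; first exact: (IH _ [::] _ [::]).
    case: e => [H|_]; [exact: (IH _ [::] _ ext H)| exact: Frun_None].
  + case: b => H; [exact: IH H | exact: Frun_None].
- case: os => [|b os] /=.
  + case: ext => [|e ext] /=; first exact: (IH _ [::] _ [::]).
    case: e => [_|H]; [exact: Frun_None| exact: (IH _ [::] _ ext H)].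
  + case: b => H; [exact: Frun_None | exact: IH H].
Qed.

Lemma Frun_cs w cs cs' os : (Frun (Some (cs, os)) w == None) = (Frun (Some (cs', os)) w == None).
Proof.
apply/eqP/eqP => H.
- by have := Frun_ext cs' [::] H; rewrite cats0.
- by have := Frun_ext cs [::] H; rewrite cats0.
Qed.

Lemma Fw_factor p x s : Fw (p ++ x ++ s) <> None -> Fw x <> None.
Proof.
move=> H E; apply: H; rewrite /Fw !Frun_cat.
case: (Frun _ p) => [[cs os]|]; last by rewrite !Frun_None.
by rewrite (Frun_ext cs os E) Frun_None.
Qed.

Definition adm (w : seq L) := Fw (w ++ w) != None.

Fixpoint wpow (K : nat) (w : seq L) := if K is K'.+1 then w ++ wpow K' w else [::].

Lemma wpowSr K w : wpow K.+1 w = wpow K w ++ w.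
Proof. elim: K => [|K IH]; first by rewrite /= cats0. by rewrite -[wpow K.+2 w]/(w ++ wpow K.+1 w) {1}IH catA. Qed.

Lemma wpow_rot K a b : wpow K.+1 (a ++ b) = a ++ wpow K (b ++ a) ++ b.
Proof.
elim: K => [|K IH]; first by rewrite /= !cats0.
by rewrite -[wpow K.+2 _]/((a ++ b) ++ wpow K.+1 (a ++ b)) IH /= !catA.
Qed.

Lemma Fw_rem_gen p u o c v s K : isOpen o -> ~~ isOpen c -> compat o c ->
  Fw (p ++ wpow K (u ++ o :: c :: v) ++ s) = Fw (p ++ wpow K (u ++ v) ++ s).
Proof.
move=> ho hc hoc; elim: K p => [|K IH] p //=.
have -> : p ++ ((u ++ o :: c :: v) ++ wpow K (u ++ o :: c :: v)) ++ s
   = (p ++ u) ++ o :: c :: (v ++ wpow K (u ++ o :: c :: v) ++ s) by rewrite -!catA.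
rewrite Fw_rem // hoc -!catA (catA u v) (catA p (u ++ v)) IH.
by rewrite -!catA.
Qed.

Lemma Fw_closed_front c x : ~~ isOpen c -> (Fw (c :: x) == None) = (Fw x == None).
Proof. by case: c => // i _; rewrite /Fw /= (Frun_cs _ _ [::]). Qed.

Lemma Fw_open_back o x : isOpen o -> (Fw (x ++ [:: o]) == None) = (Fw x == None).
Proof. by move=> ho; rewrite /Fw Frun_cat; case: (Frun _ x) => [[cs os]|]; case: o ho. Qed.

Lemma adm_rem u o c v : isOpen o -> ~~ isOpen c ->
  adm (u ++ o :: c :: v) = compat o c && adm (u ++ v).
Proof.
move=> ho hc; rewrite /adm.
have -> : (u ++ o :: c :: v) ++ u ++ o :: c :: v = u ++ o :: c :: (v ++ u ++ o :: c :: v)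
  by rewrite -catA.
rewrite Fw_rem //; case E: compat => //.
have -> : u ++ v ++ u ++ o :: c :: v = (u ++ v ++ u) ++ o :: c :: v by rewrite !catA.
by rewrite Fw_rem // -!catA E.
Qed.

Lemma adm_wrap c m o : isOpen o -> ~~ isOpen c ->
  adm (c :: m ++ [:: o]) = compat o c && adm m.
Proof.
move=> ho hc; rewrite /adm.
have -> : (c :: m ++ [:: o]) ++ c :: m ++ [:: o] = (c :: m) ++ o :: c :: (m ++ [:: o])
  by rewrite /= -catA.
rewrite Fw_rem //; case: compat => //=.
by rewrite -cat_cons catA Fw_open_back // Fw_closed_front.
Qed.

Lemma Frun_open s w : all isOpen w -> Frun (Some s) w != None.
Proof.
elim: w s => [|l w IH] [cs os] //=; case: l => //= *; exact: IH.
Qed.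

Lemma Frun_closed cs w : all (fun l => ~~ isOpen l) w -> Frun (Some (cs, [::])) w != None.
Proof.
elim: w cs => [|l w IH] cs //=; case: l => //= *; exact: IH.
Qed.

Lemma all_wpow (P : pred L) K w : all P w -> all P (wpow K w).
Proof. by move=> h; elim: K => //= K IH; rewrite all_cat h. Qed.

Lemma wclass (w : seq L) :
  (exists u o c v, w = u ++ o :: c :: v /\ isOpen o /\ ~~ isOpen c) \/
  (exists cs os, w = cs ++ os /\ all (fun l => ~~ isOpen l) cs /\ all isOpen os).
Proof.
elim: w => [|l w [[u [o [c [v [-> [ho hc]]]]]] | [cs [os [-> [hcs hos]]]]]].
- by right; exists [::], [::].
- by left; exists (l :: u), o, c, v.
- case hl: (isOpen l).
  + case: cs hcs => [|c cs] hcs.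
    * by right; exists [::], (l :: os); rewrite /= hl.
    * left; exists [::], l, c, (cs ++ os); split=> //; split=> //.
      by case/andP: hcs.
  + by right; exists (l :: cs), os; rewrite /= hl.
Qed.

Lemma adm_pow_aux N w : size w <= N -> adm w -> forall K, Fw (wpow K w) <> None.
Proof.
elim: N w => [|N IHN] w.
- rewrite leqn0 => /nilP -> _ K; have -> : wpow K [::] = [::] by elim: K. by [].
case: (wclass w) => [[u [o [c [v [-> [ho hc]]]]]] | [cs [os [-> [hcs hos]]]]].
- rewrite size_cat /= => hs; rewrite adm_rem // => /andP [hoc ha] K.
  have := Fw_rem_gen [::] u v [::] K ho hc hoc; rewrite /= !cats0 => ->.
  apply: (IHN _ _ ha); rewrite size_cat; lia.
case: cs hcs => [|c cs] hcs.
  move=> _ _ K; apply/eqP; rewrite /Fw; apply: Frun_open; exact: all_wpow.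
case/lastP: os hos => [|os o] hos.
  move=> _ _ K; apply/eqP; rewrite /Fw; rewrite cats0; apply: Frun_closed; exact: all_wpow.
have ho : isOpen o by move: hos; rewrite -cats1 all_cat /= andbT => /andP [].
have hc : ~~ isOpen c by case/andP: hcs.
rewrite -cats1 cat_cons catA => hs; rewrite adm_wrap // => /andP [hoc ha] [|K] //.
rewrite -[c :: _]/([:: c] ++ ((cs ++ os) ++ [:: o])) wpow_rot /=.
apply/eqP; rewrite Fw_closed_front // catA Fw_open_back //.
have := Fw_rem_gen [::] (cs ++ os) [::] (cs ++ os) K ho hc hoc; rewrite /= cats0 -!catA /= => ->.
rewrite -wpowSr; apply/eqP; apply: (IHN _ _ ha).
move: hs; rewrite /= !size_cat /=; lia.
Qed.

Lemma adm_pow w K : adm w -> Fw (wpow K w) <> None.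
Proof. by move=> h; apply: (adm_pow_aux (leqnn _) h). Qed.

End A.



Section D.
Variable M : nat.
Notation L := (Sigma1 M).

Definition opens : seq L := [:: Lam; Xi].
Definition closes : seq L := [seq Rho i | i <- ord_enum M] ++ [seq Eta i | i <- ord_enum M].
Definition LW (b : bool) := if b then opens else closes.
Fixpoint Wds (s : seq bool) : seq (seq L) :=
  if s is b :: s' then [seq l :: w | l <- LW b, w <- Wds s'] else [:: [::]].
Fixpoint AllSh n : seq (seq bool) :=
  if n is n'.+1 then [seq b :: s | b <- [:: true; false], s <- AllSh n'] else [:: [::]].
Fixpoint AllW n : seq (seq L) :=
  if n is n'.+1 then [seq l :: w | l <- opens ++ closes, w <- AllW n'] else [:: [::]].

Lemma sum_Wds_cat s1 s2 (F : seq L -> nat) :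
  \sum_(w <- Wds (s1 ++ s2)) F w = \sum_(u <- Wds s1) \sum_(v <- Wds s2) F (u ++ v).
Proof.
elim: s1 F => [|b s1 IH] F /=; first by rewrite big_seq1.
rewrite !big_allpairs_dep; apply: eq_bigr => l _; rewrite IH.
by apply: eq_bigr.
Qed.

Lemma sumAll n (F : seq L -> nat) :
  \sum_(w <- AllW n) F w = \sum_(s <- AllSh n) \sum_(w <- Wds s) F w.
Proof.
elim: n F => [|n IH] F; first by rewrite /= !big_seq1.
rewrite -[AllW n.+1]/([seq l :: w | l <- opens ++ closes, w <- AllW n]).
rewrite -[AllSh n.+1]/([seq b :: s | b <- [:: true; false], s <- AllSh n]).
have E : forall b, \sum_(s <- AllSh n) \sum_(w <- Wds (b :: s)) F w
    = \sum_(l <- LW b) \sum_(w <- AllW n) F (l :: w).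
  move=> b; rewrite (eq_bigr (fun s => \sum_(l <- LW b) \sum_(w <- Wds s) F (l :: w))); last first.
    by move=> s _; rewrite big_allpairs_dep.
  by rewrite exchange_big; apply: eq_bigr => l _; rewrite IH.
rewrite !big_allpairs_dep big_cat big_cons big_cons big_nil. have E1 := E true. have E2 := E false. rewrite /= in E1 E2 *. rewrite E1 E2 addn0. done.
Qed.

Lemma binom_sum n (G : nat -> nat -> nat) :
  \sum_(s <- AllSh n) G (count id s) (count negb s) = \sum_(k < n.+1) 'C(n, k) * G k (n - k).
Proof.
elim: n G => [|n IH] G; first by rewrite /= big_seq1 big_ord_recl big_ord0 bin0 mul1n addn0.
rewrite -[AllSh n.+1]/([seq b :: s | b <- [:: true; false], s <- AllSh n]).
rewrite big_allpairs_dep big_cons big_cons big_nil.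
rewrite (IH (fun a c => G a.+1 c)) (IH (fun a c => G a c.+1)).
rewrite [in RHS]big_ord_recl /= bin0 mul1n subn0.
rewrite addn0 [in RHS](eq_bigr (fun i : 'I_n.+1 => 'C(n, i) * G i.+1 (n - i) + 'C(n, i.+1) * G i.+1 (n - i))); last first.
  by move=> i _; rewrite /bump /= binS mulnDl addnC add1n subSS.
rewrite big_split /= [in RHS]addnCA; congr (_ + _).
rewrite big_ord_recl /= bin0 subn0 mul1n; congr (_ + _).
rewrite [RHS]big_ord_recr /= bin_small // mul0n addn0.
apply: eq_bigr => i _; rewrite /bump /= add1n.
by have hi := ltn_ord i; congr (_ * G _ _); lia.
Qed.


Lemma LW_open b l : l \in LW b -> isOpen l = b.
Proof.
case: b => /=; first by rewrite !inE => /orP [] /eqP ->.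
by rewrite mem_cat => /orP [] /mapP [i _ ->].
Qed.

Lemma Wds_shape s w : w \in Wds s -> map (@isOpen M) w = s.
Proof.
elim: s w => [|b s IH] w /=; first by rewrite inE => /eqP ->.
by case/allpairsP => [[l v] /= [hl hv ->]] /=; rewrite (LW_open hl) (IH _ hv).
Qed.

Lemma size_closes : size closes = M + M.
Proof. by rewrite size_cat !size_map -(size_map val) val_ord_enum size_iota. Qed.

Lemma size_Wds_nseq b k : size (Wds (nseq k b)) = (size (LW b)) ^ k.
Proof. by elim: k => //= k IH; rewrite size_allpairs IH expnS. Qed.

Definition weight a c := if c <= a then 2 ^ a * M ^ c else (2 * M) ^ c.

Lemma sclass (s : seq bool) :
  (exists s1 s2, s = s1 ++ true :: false :: s2) \/ (exists c a, s = nseq c false ++ nseq a true).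
Proof.
elim: s => [|b s [[s1 [s2 ->]] | [c [a ->]]]].
- by right; exists 0, 0.
- by left; exists (b :: s1), s2.
- case: b.
  + case: c => [|c].
    * by right; exists 0, a.+1.
    * by left; exists [::], (nseq c false ++ nseq a true).
  + by right; exists c.+1, a.
Qed.

Lemma sumc (K : nat) : \sum_(i <- ord_enum M) K = M * K.
Proof. by rewrite big_const_seq count_predT -(size_map val) val_ord_enum size_iota iter_addn_0 mulnC. Qed.

Lemma sum_oc (G : L -> L -> nat) H :
  (forall i, G Lam (Rho i) = H) -> (forall i, G Xi (Eta i) = H) ->
  (forall i, G Lam (Eta i) = 0) -> (forall i, G Xi (Rho i) = 0) ->
  \sum_(o <- opens) \sum_(c <- closes) G o c = 2 * M * H.
Proof.
move=> h1 h2 h3 h4; rewrite !big_cons big_nil !big_cat !big_map.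
rewrite (eq_bigr (fun _ => H)) // (eq_bigr (fun _ => 0) (F1 := fun i => G Lam (Eta i))) //.
rewrite (eq_bigr (fun _ => 0) (F1 := fun i => G Xi (Rho i))) //.
rewrite (eq_bigr (fun _ => H) (F1 := fun i => G Xi (Eta i))) //.
rewrite !sumc /=; lia.
Qed.

Lemma count_shape_aux N s : size s <= N ->
  \sum_(w <- Wds s) adm w = weight (count id s) (count negb s).
Proof.
elim: N s => [|N IHN] s.
  by rewrite leqn0 => /nilP ->; rewrite /= big_seq1 /weight /=.
case: (sclass s) => [[s1 [s2 ->]] | [c [a ->]]] hs.
- rewrite sum_Wds_cat.
  rewrite (eq_bigr (fun u => 2 * M * \sum_(v <- Wds s2) adm (u ++ v))); last first.
    move=> u _.
    rewrite -[Wds (true :: _)]/([seq l :: w | l <- opens, w <- Wds (false :: s2)]) big_allpairs_dep.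
    rewrite (eq_bigr (fun o => \sum_(c <- closes) \sum_(v <- Wds s2) adm (u ++ o :: c :: v))); last first.
      by move=> o _; rewrite -[Wds (false :: _)]/([seq l :: w | l <- closes, w <- Wds s2]) big_allpairs_dep.
    apply: sum_oc => i /=.
    + by apply: eq_bigr => v _; rewrite adm_rem.
    + by apply: eq_bigr => v _; rewrite adm_rem.
    + by rewrite big1 // => v _; rewrite adm_rem.
    + by rewrite big1 // => v _; rewrite adm_rem.
  rewrite -big_distrr /= -(sum_Wds_cat s1 s2 (fun w => nat_of_bool (adm w))) IHN; last by move: hs; rewrite !size_cat /=; lia.
  rewrite !count_cat /= /weight.
  set a1 := count id s1; set a2 := count id s2; set c1 := count negb s1; set c2 := count negb s2.
  have -> : c1 + (0 + (1 + c2)) = (c1 + c2).+1 by lia.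
  have -> : a1 + (1 + (0 + a2)) = (a1 + a2).+1 by lia.
  rewrite ltnS; case: ifP => _; rewrite !expnS; ring.
have Hall : forall k b w, w \in Wds (nseq k b) -> all (fun l => isOpen l == b) w.
  move=> k b w /Wds_shape hw.
  have : all (fun x => x == b) (map (@isOpen M) w) by rewrite hw all_nseq eqxx orbT.
  by rewrite all_map.
case: c hs => [|c] hs.
  rewrite /= (eq_big_seq (fun _ => 1)); last first.
    move=> w /Hall hw; rewrite /adm /Fw Frun_open //.
    by rewrite all_cat andbb; apply: sub_all hw => l /eqP.
  rewrite sum1_size size_Wds_nseq /weight.
  by rewrite !count_nseq /= mul0n mul1n muln1.
case: a hs => [|a] hs.
  rewrite -[nseq 0 true]/[::] cats0 (eq_big_seq (fun _ => 1)); last first.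
    move=> w /Hall hw; rewrite /adm /Fw Frun_closed //.
    by rewrite all_cat andbb; apply: sub_all hw => l /eqP ->.
  rewrite sum1_size size_Wds_nseq count_nseq /= /weight /= size_closes.
  by rewrite count_nseq /= mul1n add1n; congr (_ ^ _); lia.
set m := nseq c false ++ nseq a true.
have E : nseq c.+1 false ++ nseq a.+1 true = (false :: m) ++ [:: true].
  rewrite /m /= -catA; congr (_ :: _ ++ _).
  have h : forall k, nseq k.+1 true = nseq k true ++ [:: true] by elim => //= k ->.
  exact: h.
rewrite E sum_Wds_cat.
rewrite -[Wds (false :: m)]/([seq l :: w | l <- closes, w <- Wds m]) big_allpairs_dep.
rewrite (eq_bigr (fun c => \sum_(v <- Wds m) \sum_(o <- opens) adm (c :: v ++ [:: o]))); last first.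
  move=> c' _; apply: eq_bigr => v _.
  rewrite -[Wds [:: true]]/([seq l :: w | l <- opens, w <- [:: [::]]]) big_allpairs_dep.
  by apply: eq_bigr => o _; rewrite big_seq1.
rewrite (eq_bigr (fun c => \sum_(o <- opens) \sum_(v <- Wds m) adm (c :: v ++ [:: o]))); last first.
  by move=> c' _; rewrite exchange_big.
rewrite exchange_big /= (sum_oc (H := \sum_(v <- Wds m) adm v)); first last.
- by move=> i; rewrite big1 // => v _; rewrite adm_wrap.
- by move=> i; rewrite big1 // => v _; rewrite adm_wrap.
- by move=> i; apply: eq_bigr => v _; rewrite adm_wrap.
- by move=> i; apply: eq_bigr => v _; rewrite adm_wrap.
rewrite IHN; last by move: hs; rewrite /m !size_cat !size_nseq /=; lia.
rewrite /m !count_cat !count_nseq /= /weight.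
rewrite !mul0n !mul1n !add0n !addn0.
rewrite add1n addn1 ltnS; case: ifP => _; rewrite !expnS; ring.
Qed.

Lemma count_shape s : \sum_(w <- Wds s) adm w = weight (count id s) (count negb s).
Proof. exact: (count_shape_aux (leqnn _)). Qed.

End D.



Lemma sum_ind_le n h (G : nat -> nat) : h <= n ->
  \sum_(k < n.+1) (k <= h) * G k = \sum_(0 <= i < h.+1) G i.
Proof.
move=> hn; rewrite -(big_mkord xpredT (fun k => (k <= h) * G k)).
rewrite (big_cat_nat _ (n := h.+1)) //=.
have -> : \sum_(h.+1 <= i < n.+1) (i <= h) * G i = 0.
  rewrite big_nat_cond big1 // => k /andP [/andP [hk _] _].
  by rewrite leqNgt hk.
rewrite addn0.
by apply: eq_big_nat => k /andP [_ hk]; rewrite -ltnS hk mul1n.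
Qed.

Lemma final_nat M n :
  \sum_(k < n.+1) 'C(n, k) * weight M k (n - k)
  + \sum_(0 <= i < (n./2).+1) 'C(n, i) * 2 ^ i * (M ^ i + M ^ (n - i))
  = (2 * M + 1) ^ n + (M + 2) ^ n
    + (if odd n then 0 else 'C(n, n./2) * (2 * M) ^ (n./2)).
Proof.
set h := n./2.
have hn : n = h + h + odd n by rewrite /h -[n in LHS]odd_double_half -addnn addnC.
have ho : odd n <= 1 by case: odd.
have hhn : h <= n by lia.
have key : forall k, k <= n ->
  weight M k (n - k) + (k <= h) * (2 ^ k * M ^ (n - k)) + (n - k <= h) * (2 * M) ^ (n - k)
  = 2 ^ k * M ^ (n - k) + (2 * M) ^ (n - k) + (k == n - k) * (2 * M) ^ (n - k).
  move=> k hk; rewrite /weight.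
  have XY : k = n - k -> (2 * M) ^ (n - k) = 2 ^ k * M ^ (n - k).
    by move=> e; rewrite expnMn -e.
  move: XY; set X := 2 ^ k * M ^ (n - k); set Y := (2 * M) ^ (n - k); move=> XY.
  case: (leqP (n - k) k) => H1; case: (leqP k h) => H2; case: (leqP (n - k) h) => H3;
    case: eqP => H4 /=; rewrite ?mul1n ?mul0n ?addn0; try lia.
have S1 : \sum_(k < n.+1) 'C(n, k) * ((k <= h) * (2 ^ k * M ^ (n - k)))
    = \sum_(0 <= i < h.+1) 'C(n, i) * 2 ^ i * M ^ (n - i).
  rewrite (eq_bigr (fun k : 'I_n.+1 => (k <= h) * ('C(n, k) * 2 ^ k * M ^ (n - k)))).
    exact: sum_ind_le.
  by move=> k _; ring.
have S2 : \sum_(k < n.+1) 'C(n, k) * ((n - k <= h) * (2 * M) ^ (n - k))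
    = \sum_(0 <= i < h.+1) 'C(n, i) * 2 ^ i * M ^ i.
  rewrite -(big_mkord xpredT (fun k => 'C(n, k) * ((n - k <= h) * (2 * M) ^ (n - k)))).
  rewrite big_nat_rev /=.
  rewrite (eq_big_nat _ _ (F2 := fun k => (k <= h) * ('C(n, k) * 2 ^ k * M ^ k))); last first.
    move=> k /andP [_ hk]; rewrite add0n subSS subKn; last by lia.
    by rewrite bin_sub ?expnMn; [ring | lia].
  rewrite big_mkord; exact: (sum_ind_le (fun i => 'C(n, i) * 2 ^ i * M ^ i) hhn).
have E : \sum_(k < n.+1) 'C(n, k) * (((k : nat) == n - k) * (2 * M) ^ (n - k))
    = if odd n then 0 else 'C(n, h) * (2 * M) ^ h.
  case: ifP => hod.
    rewrite big1 // => k _.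
    have -> : ((k : nat) == n - k) = false by apply/eqP; rewrite hod in hn; have := ltn_ord k; lia.
    by rewrite mul0n muln0.
  have hh : h < n.+1 by lia.
  rewrite (bigD1 (Ordinal hh)) //= big1 ?addn0.
    have -> : ((h : nat) == n - h) = true by apply/eqP; rewrite hod in hn; lia.
    by rewrite mul1n; congr (_ * _ ^ _); rewrite hod in hn; lia.
  move=> k hk; have -> : ((k : nat) == n - k) = false; last by rewrite mul0n muln0.
  apply/eqP => e; move: hk; rewrite hod in hn.
  have -> : k = Ordinal hh; last by rewrite eqxx.
  apply: val_inj => /=; lia.
have A : (2 * M + 1) ^ n = \sum_(k < n.+1) 'C(n, k) * (2 * M) ^ (n - k).
  by rewrite expnDn; apply: eq_bigr => k _; rewrite exp1n muln1.
have B : (M + 2) ^ n = \sum_(k < n.+1) 'C(n, k) * (2 ^ k * M ^ (n - k)).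
  by rewrite expnDn; apply: eq_bigr => k _; rewrite [_ * 2 ^ _]mulnC.
rewrite (eq_big_nat _ _ (F2 := fun i => 'C(n, i) * 2 ^ i * M ^ i + 'C(n, i) * 2 ^ i * M ^ (n - i))); last first.
  by move=> i _; rewrite mulnDr.
rewrite big_split /= -S1 -S2 A B -E -!big_split /=.
apply: eq_bigr => k _; have hk := ltn_ord k; rewrite -!mulnDr; congr (_ * _).
have := key k; lia.
Qed.




Section G.
Variable M : nat.
Notation L := (Sigma1 M).

Definition ext n (w : seq L) : bisq M := fun i => nth Lam w `|(i %% (Posz n))%Z|.

Lemma iter_shift m (x : bisq M) i : iter m (@shift M) x i = x (i + (Posz m))%R.
Proof.
elim: m i => [|m IH] i /=; first by rewrite GRing.addr0.
by rewrite /shift IH; congr x; lia.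
Qed.

Lemma ext_nat n (w : seq L) (j : nat) : ext n w (Posz j) = nth Lam w (j %% n).
Proof. by rewrite /ext modz_nat. Qed.

Lemma ext_per n (w : seq L) : periodic_pt n (ext n w).
Proof.
apply: functional_extensionality => i; rewrite iter_shift /ext.
by rewrite GRing.addrC modzDl.
Qed.

Lemma size_wpow K (w : seq L) : size (wpow K w) = K * size w.
Proof. by elim: K => //= K IH; rewrite size_cat IH mulSn. Qed.

Lemma nth_wpow K (w : seq L) m : m < K * size w -> nth Lam (wpow K w) m = nth Lam w (m %% size w).
Proof.
elim: K m => [|K IH] m //= hm; rewrite nth_cat.
case: ltnP => h; first by rewrite modn_small.
rewrite IH; last by move: hm; rewrite mulSn; lia.
by rewrite -{2}(subnK h) modnDr.
Qed.

Lemma sub0 n (w : seq L) : size w = n -> 0 < n -> subword (ext n w) 0 (n + n).-1 = w ++ w.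
Proof.
move=> hs hn; apply: (@eq_from_nth _ Lam).
  by rewrite size_map size_iota size_cat hs; lia.
move=> j; rewrite size_map size_iota => hj.
rewrite (nth_map 0) ?size_iota // nth_iota // add0n GRing.add0r ext_nat nth_cat hs.
case: ltnP => h; first by rewrite modn_small.
by rewrite -{1}(subnK h) modnDr modn_small //; lia.
Qed.

Lemma ext_factor n (w : seq L) i k : size w = n -> 0 < n ->
  exists p s, p ++ subword (ext n w) i k ++ s = wpow (`|(i %% (Posz n))%Z| + k.+1) w.
Proof.
move=> hs hn; set r := `|(i %% (Posz n))%Z|; set K := r + k.+1.
set W := wpow K w.
have hW : r + k.+1 <= K * n by rewrite /K; nia.
have hSW : size W = K * n by rewrite /W size_wpow hs.
exists (take r W), (drop k.+1 (drop r W)).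
suff -> : subword (ext n w) i k = take k.+1 (drop r W) by rewrite !cat_take_drop.
apply: (@eq_from_nth _ Lam).
  by rewrite size_map size_iota size_take size_drop hSW; case: ltnP => //; lia.
move=> j; rewrite size_map size_iota => hj.
rewrite (nth_map 0) ?size_iota // nth_iota // add0n nth_take // nth_drop.
rewrite /W nth_wpow; last by rewrite hs; lia.
rewrite /ext hs; congr nth.
have hr : (i %% (Posz n))%Z = (Posz r).
  by rewrite /r gez0_abs // modz_ge0 //; apply/eqP; lia.
rewrite -modzDml hr -PoszD modz_nat.
by [].
Qed.

Lemma inX_ext n (w : seq L) : size w = n -> 0 < n -> adm w -> inX (ext n w).
Proof.
move=> hs hn ha i k; apply/red_nz_iff.
have [p [s E]] := ext_factor i k hs hn.
apply: (Fw_factor (p := p) (s := s)); rewrite E; exact: adm_pow.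
Qed.

Lemma adm_inX n (w : seq L) : size w = n -> 0 < n -> inX (ext n w) -> adm w.
Proof.
move=> hs hn H; have := H 0%R (n + n).-1; rewrite sub0 // => /red_nz_iff h.
by apply/eqP.
Qed.

End G.



Section H.
Variable M : nat.
Notation L := (Sigma1 M).

Lemma mem_AllW n (w : seq L) : (w \in AllW M n) = (size w == n).
Proof.
elim: n w => [|n IH] w; first by case: w.
apply/allpairsP/idP => [[[l v] /= [_ hv ->]]|].
  by rewrite /= eqSS -IH.
case: w => [|l v] //; rewrite /= eqSS -IH => hv; exists (l, v); split => //=.
have hc : forall y, y \in closes M -> y \in [:: Lam, Xi & closes M].
  by move=> y hy; rewrite !in_cons hy !orbT.
case: l => [||i|i].
- by rewrite in_cons eqxx.
- by rewrite !in_cons eqxx orbT.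
- apply: hc; rewrite /closes mem_cat; apply/orP; left.
  by apply/mapP; exists i => //; exact: mem_ord_enum.
- apply: hc; rewrite /closes mem_cat; apply/orP; right.
  by apply/mapP; exists i => //; exact: mem_ord_enum.
Qed.

Lemma uniq_closes : uniq (closes M).
Proof.
rewrite /closes cat_uniq !map_inj_uniq ?ord_enum_uniq //=; try by move=> a b [].
rewrite andbT; apply/hasPn => x /mapP [i _ ->]; apply/mapP => [[j _ E]]; discriminate E.
Qed.

Lemma uniq_AllW n : uniq (AllW M n).
Proof.
elim: n => [|n IH] //; rewrite -[AllW M n.+1]/[seq l :: w | l <- opens M ++ closes M, w <- AllW M n]; apply: allpairs_uniq => //.
- rewrite cat_uniq uniq_closes andbT /=; apply/hasPn => x.
  by rewrite /closes mem_cat => /orP [] /mapP [i _ ->].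
- by move=> [a b] [c d] _ _ /= [-> ->].
Qed.

Lemma count_sumb (s : seq (seq L)) : count (@adm M) s = \sum_(w <- s) adm w.
Proof. by elim: s => [|x s IH]; rewrite ?big_nil ?big_cons //= IH. Qed.

Lemma xper n (x : bisq M) : 0 < n -> periodic_pt n x -> forall i, x i = ext n (mkseq (fun j => x (Posz j)) n) i.
Proof.
move=> hn hp.
have hper : forall i, x (i + Posz n)%R = x i.
  by move=> i; have := congr1 (fun f => f i) hp; rewrite iter_shift.
have hK : forall m i, x (i + Posz (m * n))%R = x i.
  elim=> [|m IH] i; first by rewrite mul0n addr0.
  by rewrite mulSn addnC PoszD addrA hper IH.
move=> i; rewrite /ext nth_mkseq; last first.
  have := @intdiv.ltz_mod i (Posz n); have := @intdiv.modz_ge0 i (Posz n).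
  have hn' : Posz n != 0 by apply/eqP; lia.
  move=> /(_ hn') h1 /(_ hn') h2; lia.
have h0 : (0 <= (i %% Posz n)%Z)%R by apply: modz_ge0; apply/eqP; lia.
rewrite gez0_abs //.
have E := divz_eq i (Posz n).
case Hq: (i %/ Posz n)%Z E => [m|m] E.
- by rewrite {1}E -PoszM addrC hK.
- have -> : (i %% Posz n)%Z = (i + Posz (m.+1 * n))%R.
    by rewrite [in RHS]E NegzE PoszM; ring.
  by rewrite hK.
Qed.

End H.

Lemma PoszX (a k : nat) : (Posz a ^+ k)%R = Posz (a ^ k).
Proof. by rewrite -!natz natrX. Qed.

Lemma Posz_sum K (F : nat -> nat) :
  (\sum_(0 <= i < K) Posz (F i))%R = Posz (\sum_(0 <= i < K) F i).
Proof.
elim: K => [|K IH]; first by rewrite !big_nil.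
by rewrite !big_nat_recr //= IH PoszD.
Qed.

Local Open Scope ring_scope.

Theorem proposition3p3 (M n : nat) (hn : (1 <= n)%N) :
  exists N : nat,
    card_periodic_is M n N /\
    (N%:Z =
      (2 * M + 1)%:Z ^+ n + (M + 2)%:Z ^+ n
      - \sum_(0 <= i < (n./2).+1) ('C(n, i) * 2 ^ i)%:Z * (M%:Z ^+ i + M%:Z ^+ (n - i))
      + (if odd n then 0 else ('C(n, n./2))%:Z * (2 * M)%:Z ^+ (n./2))).
Proof.
set Lst := filter (@adm M) (AllW M n).
have uL : uniq Lst by apply: filter_uniq; apply: uniq_AllW.
have memL : forall w, (w \in Lst) = (adm w && (size w == n)) by move=> w; rewrite mem_filter mem_AllW.
exists (size Lst); split.
- exists (fun k : 'I_(size Lst) => ext n (nth [::] Lst k)); split; [|split].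
  + move=> k1 k2 E; apply: val_inj => /=; apply/eqP.
    rewrite -(nth_uniq [::] _ _ uL) //; apply/eqP.
    have := mem_nth [::] (ltn_ord k1); have := mem_nth [::] (ltn_ord k2).
    rewrite !memL => /andP [_ /eqP s2] /andP [_ /eqP s1].
    apply: (@eq_from_nth _ Lam); first by rewrite s1 s2.
    move=> j; rewrite s1 => hj.
    have := congr1 (fun f => f (Posz j)) E; rewrite /= !ext_nat modn_small //.
  + move=> k; have := mem_nth [::] (ltn_ord k); rewrite memL => /andP [ha /eqP hs].
    split; [exact: inX_ext | exact: ext_per].
  + move=> x hx hp.
    have xe := xper hn hp.
    set w := mkseq (fun j => x (Posz j)) n.
    have hs : size w = n by rewrite size_mkseq.
    have ha : adm w.
      apply: (adm_inX hs hn) => i k.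
      have -> : subword (ext n w) i k = subword x i k by apply: eq_map => j; rewrite xe.
      exact: hx.
    have wL : w \in Lst by rewrite memL ha hs eqxx.
    have hi : (index w Lst < size Lst)%N by rewrite index_mem.
    exists (Ordinal hi).
    rewrite /= nth_index //; apply: functional_extensionality => i; by rewrite xe.
- have HN : size Lst = (\sum_(k < n.+1) 'C(n, k) * weight M k (n - k))%N.
    rewrite size_filter count_sumb sumAll.
    rewrite (eq_bigr (fun s => weight M (count id s) (count negb s))); last by move=> s _; rewrite count_shape.
    exact: binom_sum.
  have := final_nat M n; rewrite -HN => Hn.
  have -> : \sum_(0 <= i < (n./2).+1) ('C(n, i) * 2 ^ i)%:Z * (M%:Z ^+ i + M%:Z ^+ (n - i))
      = Posz (\sum_(0 <= i < (n./2).+1) 'C(n, i) * 2 ^ i * (M ^ i + M ^ (n - i)))%N.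
    rewrite -Posz_sum; apply: eq_bigr => i _; by rewrite !PoszX -PoszD -PoszM.
  have -> : (if odd n then 0 else ('C(n, n./2))%:Z * (2 * M)%:Z ^+ (n./2))
      = Posz (if odd n then 0 else 'C(n, n./2) * (2 * M) ^ (n./2))%N.
    by case: odd => //; rewrite PoszX -PoszM.
  rewrite !PoszX.
  move: Hn; set S := (\sum_(0 <= i < _) _)%N; set E := (if odd n then _ else _)%N.
  move=> Hn; have := congr1 Posz Hn; rewrite !PoszD => Hz.
  lia.
Qed.
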